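(* Consider the multiobjective problem (MOP) $$\min_{(\bar{\mathbf z},\mathbf s)}\ \begin{pmatrix}g(\bar{\mathbf z})\\ h(\mathbf s)\end{pmatrix}\quad\text{subject to }(\bar{\mathbf z},\mathbf s)\in\mathbb S\text{ and }\exists\,(\mathbf z_1^\top,\dots,\mathbf z_{\mathcal I}^\top)^\top\in\mathbb D\text{ with }\bar{\mathbf z}=\tfrac1{\mathcal I}\textstyle\sum_{i=1}^{\mathcal I}\mathbf z_i,$$ and, for $\kappa\in[0,1]$, its weighted-sum scalarization of minimizing $\kappa g(\bar{\mathbf z})+(1-\kappa)h(\mathbf s)$ over the same feasible set. All efficient points of (MOP), except for the extremal points (those obtained from the scalarization with $\kappa\in\{0,1\}$), are properly efficient in the sense of Geoffrion.
   Context: Setting (a network of $\mathcal I\in\mathbb N$ residential energy systems with batteries). Fix an integer horizon $N\ge 2$, a time $k\in\mathbb N_0$, a step length $T>0$, and write $[m:n]=\{m,\dots,n\}$. For each $i\in[1:\mathcal I]$ the following are given: constants $\alpha_i,\beta_i,\gamma_i\in(0,1]$, a capacity $C_i\ge0$, bounds $\underline u_i<0<\bar u_i$, an initial state $x_i(k)\in[0,C_i]$, and data $w_i(n)\in\mathbb R$ for $n\in[k:k+N-1]$. Let $\mathbb U_i$ be the set of $(u^-,u^+)\in\mathbb R^2$ with $\underline u_i\le u^-\le0$, $0\le u^+\le\bar u_i$ and $0\le u^-/\underline u_i+u^+/\bar u_i\le1$. Let $\mathbb D_i\subset\mathbb R^N$ be the set of $\mathbf z_i=(z_i(k),\dots,z_i(k+N-1))^\top$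 for which there exist $(u_i^-(n),u_i^+(n))\in\mathbb U_i$, $n\in[k:k+N-1]$, with $x_i(n+1)=\alpha_i x_i(n)+T(\beta_iu_i^+(n)+u_i^-(n))\in[0,C_i]$ and $z_i(n)=w_i(n)+u_i^+(n)+\gamma_iu_i^-(n)$ for all $n\in[k:k+N-1]$; let $\mathbb D=\mathbb D_1\times\dots\times\mathbb D_{\mathcal I}$. A reference vector $\bar\zeta\in\mathbb R^N$ and tube bounds $\underline{\mathbf c},\bar{\mathbf c}\in\mathbb R^N$ are given, and $$\mathbb S=\Big\{(\bar{\mathbf z},\mathbf s)\in\mathbb R^N\times\mathbb R^{2N}_{\ge0}:\ \begin{pmatrix}I\\-I\end{pmatrix}\bar{\mathbf z}-\mathbf s\le\begin{pmatrix}\bar{\mathbf c}\\-\underline{\mathbf c}\end{pmatrix}\Big\}.$$ Objectives: $g(\bar{\mathbf z})=\frac1N\|\bar{\mathbf z}-\bar\zeta\|_2^2$, $h(\mathbf s)=\|\mathbf s\|_2^2$. For a vector problem $\min_{x\in\mathcal M}f(x)$, $f=(f_1,\dots,f_m)$: a feasible $x^\star$ is efficient if for all feasible $x$ and all $i$, $f_i(x)<f_i(x^\star)$ implies $f_j(x^\star)<f_j(x)$ for some $j$. It is properly efficient in the sense of Geoffrion if it is efficient and there exists $L>0$ such that for all $i$ and all feasible $x$ with $f_i(x)<f_i(x^\star)$ there exists $j$ with $f_j(x^\star)<f_j(x)$ and $\frac{f_i(x^\star)-f_i(x)}{f_j(x)-f_j(x^\star)}\le L$. *)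

(* Defs.v *)
From HB Require Import structures.
From mathcomp Require Import all_boot all_order all_algebra.
From mathcomp Require Import reals.
Set Implicit Arguments. Unset Strict Implicit. Unset Printing Implicit Defensive.
Import Order.TTheory GRing.Theory Num.Theory.
Local Open Scope ring_scope.

Section Defs.
Variable R : realType.

Definition efficient (X : Type) (m : nat) (M : X -> Prop)
  (f : 'I_m -> X -> R) (xs : X) : Prop :=
  M xs /\ forall x, M x -> forall i, f i x < f i xs ->
      exists j, f j xs < f j x.

Definition properly_efficient (X : Type) (m : nat) (M : X -> Prop)
  (f : 'I_m -> X -> R) (xs : X) : Prop :=
  efficient M f xs /\
  exists L : R, 0 < L /\
    forall i x, M x -> f i x < f i xs ->
      exists j, f j xs < f j x /\ (f i xs - f i x) / (f j x - f j xs) <= L.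

Definition inU (ulo uhi um up : R) : Prop :=
  [/\ ulo <= um <= 0, 0 <= up <= uhi & 0 <= um / ulo + up / uhi <= 1].

(** z \in D_i.  Time index n = k + j, j : 'I_N; the state trajectory is
    xs j = x_i(k + j), with xs 0 = x_i(k) = x0. *)
Definition inDi (N k : nat) (T alpha beta gamma C ulo uhi x0 : R)
  (w : nat -> R) (z : 'cV[R]_N) : Prop :=
  exists (um up : 'I_N -> R) (xs : nat -> R),
    xs 0%N = x0 /\
    forall j : 'I_N,
      [/\ inU ulo uhi (um j) (up j),
          xs j.+1 = alpha * xs j + T * (beta * up j + um j),
          0 <= xs j.+1 <= C &
          z j ord0 = w (k + j)%N + up j + gamma * um j].

Definition inS (N : nat) (cbar clow zbar : 'cV[R]_N) (s : 'cV[R]_(N + N))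
  : Prop :=
  forall r : 'I_(N + N),
    0 <= s r ord0 /\
    (col_mx zbar (- zbar) - s) r ord0 <= (col_mx cbar (- clow)) r ord0.

Definition gobj (N : nat) (zeta zbar : 'cV[R]_N) : R :=
  N%:R^-1 * \sum_(j < N) (zbar j ord0 - zeta j ord0) ^+ 2.

Definition hobj (N : nat) (s : 'cV[R]_(N + N)) : R :=
  \sum_(r < N + N) s r ord0 ^+ 2.

Definition feasible (I N k : nat) (T : R) (alpha beta gamma C ulo uhi x0 : 'I_I -> R)
  (w : 'I_I -> nat -> R) (cbar clow : 'cV[R]_N)
  (p : 'cV[R]_N * 'cV[R]_(N + N)) : Prop :=
  inS cbar clow p.1 p.2 /\
  exists z : 'I_I -> 'cV[R]_N,
    (forall i, inDi k T (alpha i) (beta i) (gamma i) (C i) (ulo i) (uhi i)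
                    (x0 i) (w i) (z i)) /\
    p.1 = I%:R^-1 *: \sum_(i < I) z i.

Definition fobj (N : nat) (zeta : 'cV[R]_N) (i : 'I_2)
  (p : 'cV[R]_N * 'cV[R]_(N + N)) : R :=
  if val i == 0%N then gobj zeta p.1 else hobj p.2.

Definition ws_solution (X : Type) (M : X -> Prop) (g h : X -> R)
  (kappa : R) (p : X) : Prop :=
  M p /\ forall q, M q ->
    kappa * g p + (1 - kappa) * h p <= kappa * g q + (1 - kappa) * h q.

End Defs.

(* Main.v *)
Require Import Defs.
From HB Require Import structures.
From mathcomp Require Import all_boot all_order all_algebra.
From mathcomp Require Import reals.
From mathcomp Require Import ring lra.
From Stdlib Require Import Classical.
Import Order.TTheory GRing.Theory Num.Theory.
Local Open Scope ring_scope.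

Section Helpers.
Context {R : realType}.

Lemma cvx_ge (t a x y : R) : 0 <= t <= 1 -> a <= x -> a <= y -> a <= t*x+(1-t)*y.
Proof. move=> /andP[t0 t1] hx hy; nra. Qed.

Lemma cvx_le (t a x y : R) : 0 <= t <= 1 -> x <= a -> y <= a -> t*x+(1-t)*y <= a.
Proof. move=> /andP[t0 t1] hx hy; nra. Qed.

Lemma sq_cvx (t a b c : R) : 0 <= t <= 1 ->
  (t*a+(1-t)*b - c)^+2 <= t*(a-c)^+2 + (1-t)*(b-c)^+2.
Proof.
move=> /andP[t0 t1].
have -> : t*(a-c)^+2 + (1-t)*(b-c)^+2 = (t*a+(1-t)*b - c)^+2 + t*(1-t)*(a-b)^+2 by ring.
rewrite lerDl; apply: mulr_ge0; [apply: mulr_ge0 => //; lra | exact: sqr_ge0].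
Qed.

Lemma key (X : Type) (M : X -> Prop) (G H : X -> R) (cc : R -> X -> X -> X) p z y :
  (forall (t : R) x1 x2, 0 <= t <= 1 -> M x1 -> M x2 -> M (cc t x1 x2)) ->
  (forall t x1 x2, 0 <= t <= 1 -> G (cc t x1 x2) <= t * G x1 + (1-t) * G x2) ->
  (forall t x1 x2, 0 <= t <= 1 -> H (cc t x1 x2) <= t * H x1 + (1-t) * H x2) ->
  (forall q, M q -> G q < G p -> H p < H q) ->
  M z -> M y -> G z < G p -> H p < H z -> H y < H p -> G p < G y ->
  (G p - G z) * (H p - H y) <= (H z - H p) * (G y - G p).
Proof.
move=> Mc Gc Hc eff Mz My gz hz hy gy.
rewrite leNgt; apply/negP => Hlt.
set a := G p - G z in Hlt; set b := H z - H p in Hlt.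
set c := G y - G p in Hlt; set d := H p - H y in Hlt.
have a0 : 0 < a by rewrite /a; lra.
have b0 : 0 < b by rewrite /b; lra.
have c0 : 0 < c by rewrite /c; lra.
have d0 : 0 < d by rewrite /d; lra.
have bd0 : 0 < b + d by lra.
set t := d / (b + d).
have ht : t * (b + d) = d by rewrite /t divfK // gt_eqF.
have t01 : 0 <= t <= 1.
  apply/andP; split; first by rewrite /t divr_ge0 // ltW.
  by rewrite /t ler_pdivrMr // mul1r; lra.
have Gq := Gc t z y t01; have Hq := Hc t z y t01.
have Mq := Mc t z y t01 Mz My.
have e1 : t * G z + (1 - t) * G y - G p = t * (- a) + (1 - t) * c
  by rewrite /a /c; ring.
have e2 : t * H z + (1 - t) * H y - H p = t * b - (1 - t) * d
  by rewrite /b /d; ring.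
have e3 : (b + d) * (t * (- a) + (1 - t) * c) = b * c - a * d.
  have : (b + d) * (t * (- a) + (1 - t) * c) = - (t * (b + d)) * a + (b+d) * c - (t * (b+d)) * c by ring.
  by rewrite ht => ->; ring.
have e4 : (b + d) * (t * b - (1 - t) * d) = 0.
  have : (b + d) * (t * b - (1 - t) * d) = (t * (b + d)) * b - (b + d) * d + (t * (b + d)) * d by ring.
  by rewrite ht => ->; ring.
have neg : t * (- a) + (1 - t) * c < 0.
  rewrite ltNge; apply/negP => h0.
  have : 0 <= (b + d) * (t * (- a) + (1 - t) * c) by apply: mulr_ge0 => //; exact: ltW.
  rewrite e3; lra.
have zer : t * b - (1 - t) * d = 0.
  by move: e4 => /eqP; rewrite mulf_eq0 gt_eqF //= => /eqP.
have gq : G (cc t z y) < G p by lra.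
have := eff _ Mq gq; lra.
Qed.

Lemma ratio_le (a b c d : R) : 0 < b -> 0 < d -> a * d <= b * c -> a / b <= c / d.
Proof.
move=> b0 d0 h; rewrite ler_pdivrMr // mulrAC ler_pdivlMr //; lra.
Qed.

Definition cc {N} (t : R) (p q : 'cV[R]_N * 'cV[R]_(N + N)) :=
  (t *: p.1 + (1 - t) *: q.1, t *: p.2 + (1 - t) *: q.2).

Lemma inDi_conv N k T al be ga C ulo uhi x0 w (z1 z2 : 'cV[R]_N) t :
  ulo < 0 < uhi -> 0 <= t <= 1 ->
  inDi k T al be ga C ulo uhi x0 w z1 -> inDi k T al be ga C ulo uhi x0 w z2 ->
  inDi k T al be ga C ulo uhi x0 w (t *: z1 + (1 - t) *: z2).
Proof.
move=> _ t01 [um1 [up1 [xs1 [x01 H1]]]] [um2 [up2 [xs2 [x02 H2]]]].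
exists (fun j => t * um1 j + (1 - t) * um2 j), (fun j => t * up1 j + (1 - t) * up2 j),
  (fun n => t * xs1 n + (1 - t) * xs2 n).
split; first by rewrite x01 x02; ring.
move=> j.
have [[/andP[a1 b1] /andP[c1 d1] /andP[e1 f1]] X1 /andP[g1 h1] Z1] := H1 j.
have [[/andP[a2 b2] /andP[c2 d2] /andP[e2 f2]] X2 /andP[g2 h2] Z2] := H2 j.
split.
- split.
  + by rewrite cvx_ge // cvx_le.
  + by rewrite cvx_ge // cvx_le.
  + have -> : (t * um1 j + (1 - t) * um2 j) / ulo + (t * up1 j + (1 - t) * up2 j) / uhi
      = t * (um1 j / ulo + up1 j / uhi) + (1 - t) * (um2 j / ulo + up2 j / uhi) by ring.
    by rewrite cvx_ge // cvx_le.
- by rewrite /= X1 X2; ring.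
- by rewrite cvx_ge // cvx_le.
- by rewrite !mxE Z1 Z2; ring.
Qed.

Lemma inS_conv N (cbar clow : 'cV[R]_N) t z1 s1 z2 s2 :
  0 <= t <= 1 -> inS cbar clow z1 s1 -> inS cbar clow z2 s2 ->
  inS cbar clow (t *: z1 + (1 - t) *: z2) (t *: s1 + (1 - t) *: s2).
Proof.
move=> t01 H1 H2 r.
have [p1 q1] := H1 r; have [p2 q2] := H2 r.
split; first by rewrite !mxE cvx_ge.
have -> : col_mx (t *: z1 + (1 - t) *: z2) (- (t *: z1 + (1 - t) *: z2))
   - (t *: s1 + (1 - t) *: s2)
   = t *: (col_mx z1 (- z1) - s1) + (1 - t) *: (col_mx z2 (- z2) - s2).
  rewrite opprD -add_col_mx -!scalerN -!scale_col_mx !scalerDr !scalerN opprD.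
  by rewrite !addrA; congr (_ + _); rewrite -!addrA; congr (_ + _); rewrite addrC.
set A := col_mx z1 (- z1) - s1; set B := col_mx z2 (- z2) - s2.
have -> : (t *: A + (1 - t) *: B) r ord0 = t * A r ord0 + (1 - t) * B r ord0 by rewrite !mxE.
by rewrite cvx_le.
Qed.

Lemma feas_conv (I N k : nat) T (alpha beta gamma C ulo uhi x0 : 'I_I -> R)
  (w : 'I_I -> nat -> R) (cbar clow : 'cV[R]_N) (t : R) p q :
  (forall i, ulo i < 0 < uhi i) -> 0 <= t <= 1 ->
  feasible k T alpha beta gamma C ulo uhi x0 w cbar clow p ->
  feasible k T alpha beta gamma C ulo uhi x0 w cbar clow q ->
  feasible k T alpha beta gamma C ulo uhi x0 w cbar clow (cc t p q).
Proof.
move=> Hu t01 [S1 [z1 [D1 E1]]] [S2 [z2 [D2 E2]]].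
split; first exact: inS_conv.
exists (fun i => t *: z1 i + (1 - t) *: z2 i); split.
  by move=> i; apply: inDi_conv.
rewrite /= E1 E2 big_split /= -!scaler_sumr !scalerA scalerDr !scalerA.
by rewrite (mulrC t) (mulrC (1 - t)).
Qed.

Lemma gobj_conv N (zeta : 'cV[R]_N) t a b : 0 <= t <= 1 ->
  gobj zeta (t *: a + (1 - t) *: b) <= t * gobj zeta a + (1 - t) * gobj zeta b.
Proof.
move=> t01; rewrite /gobj mulrCA (mulrCA (1 - t)) -mulrDr.
apply: ler_wpM2l; first by rewrite invr_ge0 ler0n.
rewrite !mulr_sumr -big_split /=; apply: ler_sum => j _.
by rewrite !mxE sq_cvx.
Qed.

Lemma hobj_conv N t (a b : 'cV[R]_(N + N)) : 0 <= t <= 1 ->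
  hobj (t *: a + (1 - t) *: b) <= t * hobj a + (1 - t) * hobj b.
Proof.
move=> t01; rewrite /hobj !mulr_sumr -big_split /=; apply: ler_sum => j _.
have := sq_cvx t (a j ord0) (b j ord0) 0 t01.
by rewrite !mxE !subr0.
Qed.

End Helpers.

Theorem corollary3 (R : realType) (I N k : nat) (T : R)
  (alpha beta gamma C ulo uhi x0 : 'I_I -> R) (w : 'I_I -> nat -> R)
  (zeta cbar clow : 'cV[R]_N) :
  (0 < I)%N -> (2 <= N)%N -> 0 < T ->
  (forall i, 0 < alpha i <= 1) -> (forall i, 0 < beta i <= 1) ->
  (forall i, 0 < gamma i <= 1) -> (forall i, 0 <= C i) ->
  (forall i, ulo i < 0 < uhi i) -> (forall i, 0 <= x0 i <= C i) ->
  let M := feasible k T alpha beta gamma C ulo uhi x0 w cbar clow in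
  let g := fun p : 'cV[R]_N * 'cV[R]_(N + N) => gobj zeta p.1 in
  let h := fun p : 'cV[R]_N * 'cV[R]_(N + N) => hobj p.2 in
  forall p, efficient M (fobj zeta) p ->
    ~ (ws_solution M g h 0 p \/ ws_solution M g h 1 p) ->
    properly_efficient M (fobj zeta) p.
Proof.
move=> _ _ _ _ _ _ _ Hu _ M g h p [Mp Heff] Hnws.
have effg : forall q, M q -> g q < g p -> h p < h q.
  move=> q Mq lt; have [[[|[|//]] Hj] /= Hlt] := Heff q Mq ord0 lt.
  - rewrite /g in lt; rewrite /fobj /= in Hlt; lra.
  - by rewrite /fobj /= in Hlt.
have effh : forall q, M q -> h q < h p -> g p < g q.
  move=> q Mq lt; have [[[|[|//]] Hj] /= Hlt] := Heff q Mq ord_max lt.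
  - by rewrite /fobj /= in Hlt.
  - rewrite /h in lt; rewrite /fobj /= in Hlt; lra.
have [y [My hy]] : exists y, M y /\ h y < h p.
  apply: NNPP => H; apply: Hnws; left; split => // q Mq.
  rewrite !mul0r !add0r subr0 !mul1r leNgt; apply/negP => hq; apply: H; exists q; by split.
have [z [Mz gz]] : exists z, M z /\ g z < g p.
  apply: NNPP => H; apply: Hnws; right; split => // q Mq.
  rewrite subrr !mul0r !addr0 !mul1r leNgt; apply/negP => hq; apply: H; exists q; by split.
have gy := effh y My hy; have hz := effg z Mz gz.
have Mc : forall (t : R) x1 x2, 0 <= t <= 1 -> M x1 -> M x2 -> M (cc t x1 x2).
  by move=> t x1 x2 t01; apply: feas_conv.
have Gc : forall (t : R) x1 x2, 0 <= t <= 1 -> g (cc t x1 x2) <= t * g x1 + (1-t) * g x2.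
  by move=> t x1 x2 t01; apply: gobj_conv.
have Hc : forall (t : R) x1 x2, 0 <= t <= 1 -> h (cc t x1 x2) <= t * h x1 + (1-t) * h x2.
  by move=> t x1 x2 t01; apply: hobj_conv.
have K z0 y0 := @key R _ M g h (@cc R N) p z0 y0 Mc Gc Hc effg.
split; first by split.
exists ((g y - g p) / (h p - h y) + (h z - h p) / (g p - g z)).
have c1 : 0 < (g y - g p) / (h p - h y) by apply: divr_gt0; lra.
have c2 : 0 < (h z - h p) / (g p - g z) by apply: divr_gt0; lra.
split; first lra.
move=> [[|[|//]] Hi] x Mx /=.
- rewrite /fobj /= => lt.
  have hx := effg x Mx lt.
  exists ord_max; rewrite /fobj /=; split => //.
  have := K x y Mx My lt hx hy gy => Hk.
  have : (g p - g x) / (h x - h p) <= (g y - g p) / (h p - h y).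
    apply: ratio_le; lra.
  move=> Hr; rewrite /g /h /= in c1 c2 Hr *; lra.
- rewrite /fobj /= => lt.
  have gx := effh x Mx lt.
  exists ord0; rewrite /fobj /=; split => //.
  have := K z x Mz Mx gz hz lt gx => Hk.
  have : (h p - h x) / (g x - g p) <= (h z - h p) / (g p - g z).
    apply: ratio_le; lra.
  move=> Hr; rewrite /g /h /= in c1 c2 Hr *; lra.
Qed.
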